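(* Let $|\xi\rangle=\sum_{n=0}^{L}\lambda_n|n\rangle$ be a normalized single-mode pure state that is a finite superposition of Fock states ($L<\infty$) with $|\xi\rangle\neq|0\rangle$. Then there exist two-outcome projective measurements $\{\Pi^A_0,\Pi^A_1\}$ on mode $A$ and $\{\Pi^B_0,\Pi^B_1\}$ on mode $B$ (independent of the inputs) such that the GYNI value satisfies $\mathcal J>\tfrac12$.
   Context: Modes $A$ and $B$ have annihilation operators $a,b$ and Fock states $|n\rangle$. For a normalized single-mode state $|\xi\rangle=\sum_n\lambda_n|n\rangle$ with $|\lambda_0|<1$ and input bits $x,y\in\{0,1\}$, the phase-encoded generalized NOON state is $|\Phi_{xy}\rangle=\mathcal N_{xy}^{-1/2}\big((-1)^x|\xi\rangle_A|0\rangle_B+(-1)^y|0\rangle_A|\xi\rangle_B\big)$ with $\mathcal N_{xy}=2(1+(-1)^{x+y}|\lambda_0|^2)$. The lossless 50:50 beam splitter is the unitary $U$ with $U|0,0\rangle=|0,0\rangle$, $Ua^\dagger U^\dagger=(a^\dagger+b^\dagger)/\sqrt2$, $Ub^\dagger U^\dagger=(a^\dagger-b^\dagger)/\sqrt2$; set $|\Phi''_{xy}\rangle=U|\Phi_{xy}\rangle$. For two-outcome projective measurements $\{\Pi^A_0,\Pi^A_1\}$, $\{\Pi^B_0,\Pi^B_1\}$ not depending on $x,y$, $P(a,b|x,y)=\langle\Phi''_{xy}|\Pi^A_a\otimes\Pi^B_b|\Phi''_{xy}\rangle$ and $\mathcal J=\frac14\big[P(0,0|0,0)+P(0,0|1,1)+P(1,1|0,1)+P(1,1|1,0)\big]$.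 The GYNI inequality is $\mathcal J\le\frac12$. *)

(* Defs.v *)
(* Complex scalars: an arbitrary numClosedFieldType C
   (algebraically closed field with conjugation and norm, e.g. algC). *)
From HB Require Import structures.
From mathcomp Require Import all_boot all_order all_algebra.
Set Implicit Arguments. Unset Strict Implicit. Unset Printing Implicit Defensive.
Import Order.TTheory GRing.Theory Num.Theory.
Local Open Scope ring_scope.

(* Single-mode Fock space truncated to photon numbers 0..L (dimension L+1).
   A two-mode vector is a matrix Psi : 'M_(L.+1), Psi m k = <m,k|Psi>
   (row index = mode A, column index = mode B). *)

Section Fock.
Variables (C : numClosedFieldType) (L : nat).

(* creation operator: a^dag |j> = sqrt(j+1) |j+1>  (exact on photon numbers < L) *)
Definition adag : 'M[C]_L.+1 :=
  \matrix_(i, j) (if (i : nat) == j.+1 then sqrtC ((i : nat)%:R) else 0).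

Definition vac : 'M[C]_L.+1 := delta_mx ord0 ord0.

Definition crA (Psi : 'M[C]_L.+1) : 'M[C]_L.+1 := adag *m Psi.
Definition crB (Psi : 'M[C]_L.+1) : 'M[C]_L.+1 := Psi *m adag^T.

(* images under the beam splitter: U a^dag U^dag = (a^dag + b^dag)/sqrt2,
   U b^dag U^dag = (a^dag - b^dag)/sqrt2 *)
Definition bsA (Psi : 'M[C]_L.+1) : 'M[C]_L.+1 := (sqrtC 2)^-1 *: (crA Psi + crB Psi).
Definition bsB (Psi : 'M[C]_L.+1) : 'M[C]_L.+1 := (sqrtC 2)^-1 *: (crA Psi - crB Psi).

(* |xi>_A|0>_B = sum_n lam_n (a^dag)^n / sqrt(n!) |0,0>, and
   U |xi>_A|0>_B = sum_n lam_n (U a^dag U^dag)^n / sqrt(n!) U|0,0>, U|0,0>=|0,0> *)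
Definition xiA (lam : 'I_L.+1 -> C) : 'M[C]_L.+1 :=
  \sum_(n < L.+1) (lam n / sqrtC (n`!)%:R) *: iter n crA vac.
Definition xiB (lam : 'I_L.+1 -> C) : 'M[C]_L.+1 :=
  \sum_(n < L.+1) (lam n / sqrtC (n`!)%:R) *: iter n crB vac.
Definition U_xiA (lam : 'I_L.+1 -> C) : 'M[C]_L.+1 :=
  \sum_(n < L.+1) (lam n / sqrtC (n`!)%:R) *: iter n bsA vac.
Definition U_xiB (lam : 'I_L.+1 -> C) : 'M[C]_L.+1 :=
  \sum_(n < L.+1) (lam n / sqrtC (n`!)%:R) *: iter n bsB vac.

Definition Nxy (lam : 'I_L.+1 -> C) (x y : bool) : C :=
  2 * (1 + (-1) ^+ (x + y) * `|lam ord0| ^+ 2).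

Definition Phi (lam : 'I_L.+1 -> C) (x y : bool) : 'M[C]_L.+1 :=
  (sqrtC (Nxy lam x y))^-1 *: ((-1) ^+ x *: xiA lam + (-1) ^+ y *: xiB lam).

Definition Phi2 (lam : 'I_L.+1 -> C) (x y : bool) : 'M[C]_L.+1 :=
  (sqrtC (Nxy lam x y))^-1 *: ((-1) ^+ x *: U_xiA lam + (-1) ^+ y *: U_xiB lam).

Definition is_projector (P : 'M[C]_L.+1) : Prop :=
  P *m P = P /\ (forall i j, P j i = (P i j)^*).

Definition is_proj_meas (P0 P1 : 'M[C]_L.+1) : Prop :=
  is_projector P0 /\ is_projector P1 /\ P0 + P1 = 1%:M.

Definition expect (PA PB Psi : 'M[C]_L.+1) : C :=
  \sum_(m < L.+1) \sum_(k < L.+1) (Psi m k)^* * (PA *m Psi *m PB^T) m k.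

Definition GYNI (lam : 'I_L.+1 -> C) (PA0 PA1 PB0 PB1 : 'M[C]_L.+1) : C :=
  4^-1 * ( expect PA0 PB0 (Phi2 lam false false)
         + expect PA0 PB0 (Phi2 lam true true)
         + expect PA1 PB1 (Phi2 lam false true)
         + expect PA1 PB1 (Phi2 lam true false)).

End Fock.

(* Main.v *)
Require Import Defs.
From HB Require Import structures.
From mathcomp Require Import all_boot all_order all_algebra.
From mathcomp Require Import ring lra zify.
Import Order.TTheory GRing.Theory Num.Theory.
Local Open Scope ring_scope.

Section Aux.
Variables (C : numClosedFieldType) (L : nat).

Lemma sum_pick n (N : nat) (F : 'I_n -> C) :
  \sum_(i < n) (if (i : nat) == N then F i else 0) =
  if (N < n)%N =P true is ReflectT h then F (Ordinal h) else 0.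
Proof.
case: eqP => [h|h].
  rewrite (bigD1 (Ordinal h)) //= eqxx big1 ?addr0 // => i.
  case: eqP => // Ei _; case: eqP => // EiN; exfalso; apply: Ei; exact: val_inj.
by rewrite big1 // => i _; case: eqP => // Ei; case: h; rewrite -Ei ltn_ord.
Qed.

Lemma sum_pick' n (N : nat) (F : nat -> C) : (N < n)%N ->
  \sum_(i < n) (if (i : nat) == N then F i else 0) = F N.
Proof.
move=> h; rewrite (@sum_pick n N (fun i : 'I_n => F i)).
by case: eqP => // ?; rewrite h.
Qed.

Definition s : C := (sqrtC 2)^-1.
Definition r (j : nat) : C := sqrtC (j`!)%:R.

Lemma rS m : r m.+1 = sqrtC (m.+1)%:R * r m.
Proof. by rewrite /r factS natrM sqrtCM // qualifE /= ler0n. Qed.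

Lemma r0 : r 0 = 1.
Proof. by rewrite /r /= sqrtC1. Qed.

Lemma crA_E (Psi : 'M[C]_L.+1) (j k : 'I_L.+1) :
  crA Psi j k = if (j : nat) is j'.+1 then sqrtC (j%:R) * Psi (inord j') k else 0.
Proof.
rewrite /crA mxE; case: j => [[|j'] hj] /=.
  by rewrite big1 // => i _; rewrite mxE /= mul0r.
rewrite (eq_bigr (fun i : 'I_L.+1 => if (i:nat) == j' then sqrtC (j'.+1)%:R * Psi i k else 0)).
  rewrite sum_pick; case: eqP => // h; last by exfalso; apply: h; apply: ltnW.
  by congr (_ * Psi _ _); apply/val_inj; rewrite /= inordK.
by move=> i _; rewrite mxE eqSS eq_sym; case: eqP => //; rewrite mul0r.
Qed.

Lemma crB_E (Psi : 'M[C]_L.+1) (j k : 'I_L.+1) :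
  crB Psi j k = if (k : nat) is k'.+1 then sqrtC (k%:R) * Psi j (inord k') else 0.
Proof.
rewrite /crB mxE; case: k => [[|k'] hk] /=.
  by rewrite big1 // => i _; rewrite !mxE /= mulr0.
rewrite (eq_bigr (fun i : 'I_L.+1 => if (i:nat) == k' then sqrtC (k'.+1)%:R * Psi j i else 0)).
  rewrite sum_pick; case: eqP => // h; last by exfalso; apply: h; apply: ltnW.
  by congr (_ * Psi _ _); apply/val_inj; rewrite /= inordK.
by move=> i _; rewrite !mxE eqSS eq_sym; case: eqP => //; rewrite ?mulr0 // mulrC.
Qed.


Lemma iter_bs (f : 'M[C]_L.+1 -> 'M[C]_L.+1) (e : C)
  (Hf : forall Psi, f Psi = s *: (crA Psi + e *: crB Psi)) n (j k : 'I_L.+1) :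
  iter n f (vac C L) j k =
  if (j + k == n)%N then s ^+ n * ('C(n, j))%:R * r j * r k * e ^+ k else 0.
Proof.
elim: n j k => [|n IH] j k.
  rewrite /vac mxE; case: j => [[|j] hj]; case: k => [[|k] hk] //=.
  by rewrite r0 !expr0 !mul1r.
rewrite iterS Hf; set P := iter n f _; rewrite mxE [in LHS]mxE [in X in _ + X]mxE crA_E crB_E.
case: j => [[|j] hj]; case: k => [[|k] hk] /=; rewrite ?IH /= ?inordK //;
  try exact: ltnW.
all: rewrite ?addSn ?addnS ?add0n ?addn0 ?eqSS; try (case: eqP => E);
  rewrite ?mulr0 ?addr0 ?add0r ?mulr0 //.
all: rewrite ?binS ?bin0 ?natrD ?rS ?r0 ?exprS.
all: try ring.
rewrite -E (bin_small (ltnSn j)); ring.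
Qed.


Lemma norm2_pick n (N : nat) (F : 'I_n -> C) :
  `|\sum_(i < n) (if (i : nat) == N then F i else 0)| ^+ 2 =
  \sum_(i < n) (if (i : nat) == N then `|F i| ^+ 2 else 0).
Proof. by rewrite !sum_pick; case: eqP => // _; rewrite normr0 expr0n. Qed.

Lemma nr m : `|r m| ^+ 2 = (m`!)%:R.
Proof. by rewrite ger0_norm ?sqrtC_ge0 ?ler0n // sqrtCK. Qed.

Lemma ns : `|s| ^+ 2 = 2^-1.
Proof. by rewrite /s normfV exprVn ger0_norm ?sqrtC_ge0 ?ler0n // sqrtCK. Qed.

Lemma nsn n : `|s ^+ n| ^+ 2 = 2^-1 ^+ n.
Proof. by rewrite normrX -exprM mulnC exprM ns. Qed.

Lemma r_neq0 m : r m != 0.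
Proof. by rewrite /r sqrtC_eq0 pnatr_eq0 -lt0n fact_gt0. Qed.

Lemma oddsum n : \sum_(k < n.+1) ((odd k)%:R : C) * ('C(n, k))%:R =
  2^-1 * (2 ^+ n - (n == 0%N)%:R).
Proof.
have e1 := exprDn (1 : C) 1 n.
have e2 := exprDn (1 : C) (-1) n.
have -> : (2 : C) = 1 + 1 by rewrite -[2]/(1 *+ 2) mulr2n.
have e3 : ((n == 0%N)%:R : C) = \sum_(i < n.+1) 1 ^+ (n - i) * (-1) ^+ i *+ 'C(n, i).
  by rewrite -e2 subrr expr0n.
rewrite e1 e3 -sumrB mulr_sumr.
apply: eq_bigr => k _; rewrite -signr_odd.
rewrite -[_ * 1 ^+ k *+ _]mulr_natr -[_ * (-1) ^+ _ *+ _]mulr_natr !expr1n; case: (odd k) => /=; field.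
all: by [].
Qed.

Variable lam : 'I_L.+1 -> C.

Definition T n (j k : nat) : C := s ^+ n * ('C(n, j))%:R * r j * r k.
Definition Uc (j k : nat) : C :=
  \sum_(n < L.+1) (if (n : nat) == (j + k)%N then lam n / r n * T n j k else 0).
Definition W (j k : nat) : C := `|Uc j k| ^+ 2.

Lemma UA_E (j k : 'I_L.+1) : U_xiA lam j k = Uc j k.
Proof.
rewrite /U_xiA summxE; apply: eq_bigr => n _.
rewrite mxE (@iter_bs _ 1) => [|Psi]; last by rewrite scale1r.
by rewrite eq_sym; case: eqP => _; rewrite ?expr1n ?mulr1 ?mulr0.
Qed.

Lemma UB_E (j k : 'I_L.+1) : U_xiB lam j k = (-1) ^+ k * Uc j k.
Proof.
rewrite /U_xiB summxE /Uc mulr_sumr; apply: eq_bigr => n _.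
rewrite mxE (@iter_bs _ (-1)) => [|Psi]; last by rewrite scaleN1r.
rewrite eq_sym; case: eqP => _; rewrite ?mulr0 // /T; ring.
Qed.

Lemma Phi2_E x y (j k : 'I_L.+1) : Phi2 lam x y j k =
  (sqrtC (Nxy lam x y))^-1 * ((-1) ^+ x + (-1) ^+ y * (-1) ^+ k) * Uc j k.
Proof.
rewrite /Phi2 mxE [in LHS]mxE [in X in _ + X]mxE [in X in X + _]mxE UA_E UB_E.
ring.
Qed.

Lemma W_E (j k : nat) : W j k = \sum_(n < L.+1)
  (if (n : nat) == (j + k)%N then `|lam n| ^+ 2 * 2^-1 ^+ n * ('C(n, k))%:R else 0).
Proof.
rewrite /W /Uc norm2_pick; apply: eq_bigr => n _; case: eqP => // ->.
have Cjk : 'C(j + k, j) = 'C(j + k, k).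
  by rewrite -[X in 'C(_, X)](addnK k j) bin_sub // leq_addl.
have Hf : ((j + k)`!)%:R = ('C(j + k, k))%:R * ((k`!)%:R * (j`!)%:R) :> C.
  by rewrite -!natrM -(bin_fact (leq_addl j k)) addnK.
rewrite /T Cjk !normrM normfV !exprMn nsn normr_nat !exprVn !nr Hf.
have c0 : ('C(j + k, k))%:R != 0 :> C by rewrite pnatr_eq0 -lt0n bin_gt0 leq_addl.
have a0 : (k`!)%:R != 0 :> C by rewrite pnatr_eq0 -lt0n fact_gt0.
have b0 : (j`!)%:R != 0 :> C by rewrite pnatr_eq0 -lt0n fact_gt0.
field.
by rewrite c0 a0 b0 expf_neq0 // pnatr_eq0.
Qed.


Lemma sumW (g : nat -> C) :
  \sum_(j < L.+1) \sum_(k < L.+1) g k * W j k =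
  \sum_(n < L.+1) `|lam n| ^+ 2 * 2^-1 ^+ n * \sum_(k < n.+1) g k * ('C(n, k))%:R.
Proof.
pose H (n k : nat) := `|lam (inord n)| ^+ 2 * 2^-1 ^+ n * ('C(n, k))%:R.
transitivity (\sum_(j < L.+1) \sum_(k < L.+1) \sum_(n < L.+1)
    (if (n : nat) == (j + k)%N then g k * H n k else 0)).
  apply: eq_bigr => j _; apply: eq_bigr => k _; rewrite W_E mulr_sumr.
  apply: eq_bigr => n _; case: eqP => _; rewrite ?mulr0 // /H inord_val //.
rewrite exchange_big /=.
rewrite (eq_bigr (fun k : 'I_L.+1 => \sum_(n < L.+1) \sum_(j < L.+1)
    (if (n : nat) == (j + k)%N then g k * H n k else 0))); last first.
  by move=> k _; rewrite exchange_big.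
rewrite exchange_big /=; apply: eq_bigr => n _.
transitivity (\sum_(k < L.+1) g k * H n k).
  apply: eq_bigr => k _.
  rewrite (eq_bigr (fun j : 'I_L.+1 => if (j : nat) == (n - k)%N then
     (if (k <= n)%N then g k * H n k else 0) else 0)); last first.
    move=> j _; case: (leqP k n) => hk.
      by congr (if _ then _ else _); apply/eqP/eqP; lia.
    by case: eqP => // E; case: eqP => //; lia.
  rewrite (@sum_pick' L.+1 (n - k) (fun _ => if (k <= n)%N then g k * H n k else 0)); last exact: leq_ltn_trans (leq_subr k n) (ltn_ord n).
  case: (leqP k n) => // hk; by rewrite /H bin_small // mulr0 mulr0.
rewrite mulr_sumr (big_ord_widen L.+1 (fun i : nat => `|lam n| ^+ 2 * 2^-1 ^+ n * (g i * 'C(n, i)%:R)) (ltn_ord n)) big_mkcond /=.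
rewrite [RHS]big_mkcond /=. apply: eq_bigr => k _; rewrite /H inord_val.
case: ifP => hk; first ring.
by rewrite bin_small ?mulr0 //; rewrite ltnNge; apply: negbT.
Qed.


Lemma sum_odd_W : \sum_(j < L.+1) \sum_(k < L.+1) (odd k)%:R * W j k =
  2^-1 * (\sum_(n < L.+1) `|lam n| ^+ 2 - `|lam ord0| ^+ 2).
Proof.
rewrite (sumW (fun k => (odd k)%:R)).
transitivity (\sum_(n < L.+1) 2^-1 * `|lam n| ^+ 2 -
   \sum_(n < L.+1) (if (n : nat) == 0%N then 2^-1 * `|lam n| ^+ 2 else 0)).
  rewrite -sumrB; apply: eq_bigr => n _; rewrite oddsum exprVn.
  have h2 : (2 ^+ n : C) != 0 by rewrite expf_neq0 // pnatr_eq0.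
  by case: eqP => E; rewrite ?E /=; field.
rewrite -mulr_sumr sum_pick; case: eqP => // h; rewrite mulrBr; congr (_ - _).
by congr (_ * `|lam _| ^+ 2); apply: val_inj.
Qed.

Lemma W_row0 (M : 'I_L.+1) (hM : forall n : 'I_L.+1, (M < n)%N -> lam n = 0) k :
  (0 < k)%N -> W M k = 0.
Proof.
move=> hk; rewrite W_E big1 // => n _; case: eqP => // E.
by rewrite hM ?normr0 ?expr0n ?mul0r //= E; lia.
Qed.

Lemma W_M0 (M : 'I_L.+1) : lam M != 0 -> 0 < W M 0.
Proof.
move=> hM; rewrite W_E addn0 sum_pick; case: eqP => h; last by exfalso; apply: h; exact: ltn_ord.
rewrite bin0 mulr1 (_ : Ordinal h = M); last exact: val_inj.
by rewrite mulr_gt0 ?exprn_gt0 ?normr_gt0 ?invr_gt0 ?ltr0n.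
Qed.

Definition dg (p : pred 'I_L.+1) : 'M[C]_L.+1 := diag_mx (\row_i ((p i)%:R : C)).

Lemma dg_proj p : is_projector (dg p).
Proof.
split.
  apply/matrixP => i j; rewrite mul_diag_mx !mxE.
  by case: (p i); case: (i == j); rewrite /= ?mulr1n ?mulr0n ?mul1r ?mul0r.
move=> i j; rewrite !mxE eq_sym; case: eqP => [->|]; rewrite ?mulr0n ?mulr1n ?conjC0 //.
by rewrite conjC_nat.
Qed.

Lemma dg_meas p : is_proj_meas (dg p) (dg (predC p)).
Proof.
split; [exact: dg_proj|split; [exact: dg_proj|]].
apply/matrixP => i j; rewrite !mxE /=.
by case: (p i); case: (i == j); rewrite /= ?mulr1n ?mulr0n ?addr0 ?add0r.
Qed.

Lemma expect_dg p q (Psi : 'M[C]_L.+1) : expect (dg p) (dg q) Psi =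
  \sum_(m < L.+1) \sum_(k < L.+1) (p m)%:R * (q k)%:R * `|Psi m k| ^+ 2.
Proof.
apply: eq_bigr => m _; apply: eq_bigr => k _.
rewrite /dg tr_diag_mx mul_diag_mx mul_mx_diag !mxE normCK; ring.
Qed.

Lemma sgnE (x y : bool) (k : nat) :
  `|(-1) ^+ x + (-1) ^+ y * (-1) ^+ k| ^+ 2 = 4 * ((x (+) y) == odd k)%:R :> C.
Proof.
rewrite -[(-1) ^+ k]signr_odd; case: x; case: y; case: (odd k) => /=.
all: rewrite ?expr0 ?expr1 normCK ?mulr1 ?mul1r ?mulN1r ?rmorphD ?rmorphN ?rmorphB ?conjC1; ring.
Qed.



Lemma E_gen pA pB x y : expect (dg pA) (dg pB) (Phi2 lam x y) =
  `|(sqrtC (Nxy lam x y))^-1| ^+ 2 * 4 * \sum_(m < L.+1) \sum_(k < L.+1)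
     (pA m)%:R * ((pB k) && ((x (+) y) == odd k))%:R * W m k.
Proof.
rewrite expect_dg mulr_sumr; apply: eq_bigr => m _.
rewrite mulr_sumr; apply: eq_bigr => k _.
rewrite Phi2_E !normrM !exprMn sgnE /W -mulnb natrM; ring.
Qed.

End Aux.
Arguments dg {C L}.

Theorem mainTheorem2 (C : numClosedFieldType) (L : nat) (lam : 'I_L.+1 -> C)
    (hnorm : \sum_(n < L.+1) `|lam n| ^+ 2 = 1)
    (hnotvac : `|lam ord0| < 1) :
  exists PA0 PA1 PB0 PB1 : 'M[C]_L.+1,
    is_proj_meas PA0 PA1 /\ is_proj_meas PB0 PB1 /\
    2^-1 < GYNI lam PA0 PA1 PB0 PB1.
Proof.
have [M [hM0 hM]] : exists M : 'I_L.+1, lam M != 0 /\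
    forall n : 'I_L.+1, (M < n)%N -> lam n = 0.
  case: (pickP (fun i => lam i != 0)) => [i0 hi0|hnone].
    case: (@arg_maxnP _ i0 (fun i => lam i != 0) (fun i => i : nat) hi0) => M hM hmax.
    exists M; split => // n hn; apply/eqP; apply: contraTT hn => hn.
    by rewrite -leqNgt; exact: hmax.
  exfalso; move: hnorm; rewrite big1 => [/eqP|i _]; first by rewrite eq_sym oner_eq0.
  by have := hnone i; move/negbFE/eqP ->; rewrite normr0 expr0n.
exists (dg (pred1 M)), (dg (predC (pred1 M))), (dg (fun k : 'I_L.+1 => ~~ odd k)),
  (dg (predC (fun k : 'I_L.+1 => ~~ odd k))).
split; first exact: dg_meas. split; first exact: dg_meas.
rewrite /GYNI !E_gen /=.
have S0 : \sum_(m < L.+1) \sum_(k < L.+1)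
   (m == M)%:R * (~~ odd k && (false == odd k))%:R * W C L lam m k = W C L lam M 0.
  rewrite (bigD1 M) //= [X in _ + X]big1 ?addr0; last first.
    move=> m hm; rewrite (negbTE hm).
    by rewrite big1 // => k _; rewrite !mul0r.
  rewrite (bigD1 ord0) //= big1 ?addr0 => [|k hk]; first by rewrite eqxx !mul1r.
  rewrite W_row0 ?mulr0 //; rewrite lt0n; apply: contra hk => /eqP hk.
  by apply/eqP/val_inj.
have Z : \sum_(k < L.+1) (odd k)%:R * W C L lam M k = 0.
  apply: big1 => k _; case: (posnP k) => [->|hk]; first by rewrite mul0r.
  by rewrite W_row0 ?mulr0.
have S1 : \sum_(m < L.+1) \sum_(k < L.+1)
   (m != M)%:R * (~~ ~~ odd k && (true == odd k))%:R * W C L lam m k =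
   2^-1 * (1 - `|lam ord0| ^+ 2).
  rewrite -[X in 2^-1 * (X - _)]hnorm -sum_odd_W [RHS](bigD1 M) //= Z add0r.
  rewrite [LHS](bigD1 M) //= eqxx [X in X + _]big1 ?add0r; last first.
    by move=> k _; rewrite !mul0r.
  apply: eq_bigr => m hm; rewrite hm.
  by apply: eq_bigr => k _; case: (odd k); rewrite /= ?mul1r ?mul0r.
have nc N : 0 <= N -> `|(sqrtC N)^-1| ^+ 2 = N^-1 :> C.
  by move=> hN; rewrite normfV exprVn ger0_norm ?sqrtC_ge0 // sqrtCK.
set a := `|lam ord0| ^+ 2.
have ha0 : 0 <= a by rewrite exprn_ge0.
have ha1 : a < 1 by rewrite exprn_ilt1.
have hW := @W_M0 C L lam M hM0.
rewrite S0 S1 /Nxy /= expr0 expr1 sqrrN expr1n mul1r mulN1r.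
have hp : 0 < 1 + a by rewrite (lt_le_trans ltr01) // lerDl.
have hm : 0 < 1 - a by rewrite subr_gt0.
rewrite !nc ?mulr_ge0 ?ltW //.
have -> : forall w : C, 4^-1 * ((2 * (1 + a))^-1 * 4 * w + (2 * (1 + a))^-1 * 4 * w +
   (2 * (1 - a))^-1 * 4 * (2^-1 * (1 - a)) + (2 * (1 - a))^-1 * 4 * (2^-1 * (1 - a)))
   = 2^-1 + w / (1 + a).
  move=> w; field.
  by rewrite (gt_eqF hp) (gt_eqF hm).
by rewrite ltrDl divr_gt0.
Qed.
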